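(* Let $\lambda\in\mathbb{R}\setminus\Sigma_0$. Then $\lambda\in\bigcup_{\Theta\in[-\pi,\pi]^2}\sigma(\mathcal{A}^\Theta)$ (i.e. $\lambda\in\sigma(\mathcal A)$) if and only if there exists $(\theta_1,\theta_2)\in[-\pi,\pi]^2$ such that $$(1\ \ \rho)\,\mathbb{M}\begin{pmatrix}1\\0\end{pmatrix}-\frac{\lambda m}{3a}\,(1\ \ \rho)\,\mathbb{M}\begin{pmatrix}\rho\\1\end{pmatrix}=\pm\frac{|S(\theta_1,\theta_2)|}{3},$$ equivalently $\mathcal{D}_1(\lambda)-\frac{\lambda m}{3a}\mathcal{D}_0(\lambda)=\pm|S(\theta_1,\theta_2)|/3$.
   Context: Fix $a>0$, $\kappa^{-1}\ge 0$, $m\ge 0$, $\rho:=a\kappa^{-1}$, and a real symmetric potential $q_0\in L^\infty(0,1)$, $q_0(x)=q_0(1-x)$. The hexagonal lattice $G$ (edges of length 1, identified with $[0,1]$, potential $q_0$ on each edge) carries the Hamiltonian $\mathcal A$: $u_e\mapsto -au_e''+q_0u_e$ with vertex conditions at each vertex $v$ ($\partial_nu_e(v)$ = outward derivative: $-u_e'(0)$ at $x=0$, $u_e'(1)$ at $x=1$): $u_e(v)+\rho\,\partial_nu_e(v)=\omega_v$ for all $e\ni v$ and $a\sum_{e\ni v}\partial_nu_e(v)=\lambda m\,\omega_v$. By Floquet–Bloch theory $\sigma(\mathcal A)=\bigcup_\Theta\sigma(\mathcal A^\Theta)$, where for $\Theta=(\theta_1,\theta_2)\in[-\pi,\pi]^2$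 a real $\lambda\in\sigma(\mathcal A^\Theta)$ iff there are $u_1,u_2,u_3\in H^2(0,1)$, $\omega_0,\omega_1\in\mathbb C$, not all zero, with $-au_j''+q_0u_j=\lambda u_j$, $u_j(0)-\rho u_j'(0)=\omega_0$ ($j=1,2,3$), $-a\sum_ju_j'(0)=\lambda m\omega_0$, $u_1(1)+\rho u_1'(1)=e^{i\theta_1}(u_2(1)+\rho u_2'(1))=e^{i\theta_2}(u_3(1)+\rho u_3'(1))=\omega_1$, $a(u_1'(1)+e^{i\theta_1}u_2'(1)+e^{i\theta_2}u_3'(1))=\lambda m\omega_1$. $S(\theta_1,\theta_2):=1+e^{-i\theta_1}+e^{-i\theta_2}$. $\Sigma_0$: set of real $\lambda$ for which $-au''+q_0u=\lambda u$, $u(0)-\rho u'(0)=0$, $u(1)+\rho u'(1)=0$ has a nontrivial solution. Fundamental solutions: $c_\lambda,s_\lambda$ solve $-ay''+q_0y=\lambda y$ on $[0,1]$ with $c_\lambda(0)=1,c_\lambda'(0)=0,s_\lambda(0)=0,s_\lambda'(0)=1$; monodromy matrix $\mathbb M=\begin{pmatrix}c_\lambda(1)&s_\lambda(1)\\c_\lambda'(1)&s_\lambda'(1)\end{pmatrix}$. $\mathcal D_1(\lambda):=c_\lambda(1)+\rho c_\lambda'(1)$, $\mathcal D_2(\lambda):=s_\lambda(1)+\rho s_\lambda'(1)$, $\mathcal D_0(\lambda):=\mathcal D_2(\lambda)+\rho\mathcal D_1(\lambda)$. *)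

(* Defs.v *)
From HB Require Import structures.
From mathcomp Require Import all_boot all_order all_algebra.
From mathcomp Require Import all_classical all_reals all_analysis.
From mathcomp Require Import complex.
Set Implicit Arguments. Unset Strict Implicit. Unset Printing Implicit Defensive.
Import Order.TTheory GRing.Theory Num.Theory.
Import numFieldNormedType.Exports.
Local Open Scope classical_set_scope.
Local Open Scope ring_scope.

Section Defs.
Context {R : realType}.

(* [is_sol a q lam y p]: y is a (real, H^2) solution of  -a y'' + q y = lam y
   on [0,1], with p = y'.  Written in the standard integrated form
   y(x) = y(0) + int_0^x p,  p(x) = p(0) + int_0^x (q - lam)/a * y,
   which is equivalent to y in H^2(0,1) and the equation holding a.e. *)
Definition is_sol (a : R) (q : R -> R) (lam : R) (y p : R -> R) : Prop :=
  {within `[0, 1], continuous y} /\ {within `[0, 1], continuous p} /\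
  forall x : R, 0 <= x <= 1 ->
    y x = y 0 + Rintegral lebesgue_measure `[0, x] p /\
    p x = p 0 + Rintegral lebesgue_measure `[0, x] (fun t => (q t - lam) / a * y t).

Definition is_csol (a : R) (q : R -> R) (lam : R) (u up : R -> R[i]) : Prop :=
  is_sol a q lam (fun x => complex.Re (u x)) (fun x => complex.Re (up x)) /\
  is_sol a q lam (fun x => complex.Im (u x)) (fun x => complex.Im (up x)).

Definition expi (t : R) : R[i] := (cos t +i* sin t)%C.

Definition Sfun (th1 th2 : R) : R[i] := 1 + expi (- th1) + expi (- th2).

Definition in_spec_Theta (a rho m : R) (q : R -> R) (lam th1 th2 : R) : Prop :=
  exists (u1 p1 u2 p2 u3 p3 : R -> R[i]) (w0 w1 : R[i]),
    [/\ is_csol a q lam u1 p1, is_csol a q lam u2 p2 & is_csol a q lam u3 p3] /\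
    ~ ((forall x : R, 0 <= x <= 1 -> [/\ u1 x = 0, u2 x = 0 & u3 x = 0])
       /\ w0 = 0 /\ w1 = 0) /\
    [/\ u1 0 - rho%:C * p1 0 = w0, u2 0 - rho%:C * p2 0 = w0
      & u3 0 - rho%:C * p3 0 = w0]%C /\
    (- a%:C * (p1 0 + p2 0 + p3 0) = (lam * m)%:C * w0)%C /\
    [/\ u1 1 + rho%:C * p1 1 = w1,
        expi th1 * (u2 1 + rho%:C * p2 1) = w1
      & expi th2 * (u3 1 + rho%:C * p3 1) = w1]%C /\
    (a%:C * (p1 1 + expi th1 * p2 1 + expi th2 * p3 1) = (lam * m)%:C * w1)%C.

Definition in_spec (a rho m : R) (q : R -> R) (lam : R) : Prop :=
  exists th1 th2 : R, -pi <= th1 <= pi /\ -pi <= th2 <= pi /\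
    in_spec_Theta a rho m q lam th1 th2.

Definition in_Sigma0 (a rho : R) (q : R -> R) (lam : R) : Prop :=
  exists y p : R -> R, is_sol a q lam y p /\
    y 0 - rho * p 0 = 0 /\ y 1 + rho * p 1 = 0 /\
    exists x : R, 0 <= x <= 1 /\ y x != 0.

End Defs.

(* Main.v *)
Require Import Defs.
From HB Require Import structures.
From mathcomp Require Import all_boot all_order all_algebra.
From mathcomp Require Import all_classical all_reals all_analysis.
From mathcomp Require Import complex.
From mathcomp Require Import measurable_realfun ring lra.
Import Order.TTheory GRing.Theory Num.Theory.
Import numFieldNormedType.Exports.
Local Open Scope classical_set_scope.
Local Open Scope ring_scope.
Set Implicit Arguments. Unset Strict Implicit. Unset Printing Implicit Defensive.

Section Good.
Context {R : realType}.
Notation mu := (@lebesgue_measure R).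
Definition I01 : set R := `[0, 1].

Definition good (f : R -> R) :=
  measurable_fun I01 f /\ exists M : R, forall x, 0 <= x <= 1 -> `|f x| <= M.

Lemma I01P x : I01 x <-> 0 <= x <= 1.
Proof. by rewrite /I01 /= in_itv. Qed.

Lemma good_int f (D : set (measurableTypeR R)) : good f -> measurable D -> D `<=` I01 ->
  mu.-integrable D (EFin \o f).
Proof.
move=> [mf [M hM]] mD DI.
have mI : measurable I01 by exact: measurable_itv.
apply: measurable_bounded_integrable => //.
-   apply: (@le_lt_trans _ _ (mu I01)).
    by apply: le_measure => //; rewrite inE.
  by rewrite /I01 lebesgue_measure_itv /= lte01 -EFinD ltry.
- exact: (measurable_funS mI DI mf).
- exists M; split; first by rewrite num_real.
  move=> N hN x Dx /=; apply: le_trans (ltW hN).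
  by apply: hM; apply/I01P; exact: DI.
Qed.

Lemma cont_good f : {within I01, continuous f} -> good f.
Proof.
move=> cf; split.
  by apply: subspace_continuous_measurable_fun => //; exact: measurable_itv.
have [c1 _ h1] := EVT_max ler01 cf.
have [c2 _ h2] := EVT_min ler01 cf.
exists (`|f c1| + `|f c2|) => x x01.
have xi : x \in `[0, 1] by rewrite in_itv.
have := h1 _ xi; have := h2 _ xi.
case: (lerP 0 (f x)) => hx ? ?.
  rewrite ger0_norm //; apply: (le_trans (y:=f c1)) => //.
  by apply: le_trans (ler_norm _) _; rewrite lerDl.
rewrite ltr0_norm //; apply: (le_trans (y:= `|f c2|)); last by rewrite lerDr.
by rewrite -normrN; apply: le_trans (ler_norm _); rewrite lerN2.
Qed.

Lemma goodD f g : good f -> good g -> good (f \+ g).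
Proof.
move=> [mf [M hM]] [mg [N hN]]; split; first exact: measurable_funD.
exists (M + N) => x hx; apply: le_trans (ler_normD _ _) _.
by apply: lerD; [apply: hM | apply: hN].
Qed.

Lemma goodM f g : good f -> good g -> good (f \* g).
Proof.
move=> [mf [M hM]] [mg [N hN]]; split; first exact: measurable_funM.
exists (M * N) => x hx /=; rewrite normrM.
by apply: ler_pM => //; [apply: hM | apply: hN].
Qed.

Lemma good_cst k : good (fun _ => k).
Proof. split; first exact: measurable_cst. by exists `|k|. Qed.

Lemma goodZ k f : good f -> good (fun x => k * f x).
Proof. by move=> gf; have := goodM (good_cst k) gf. Qed.

Lemma good_lin k1 k2 f g : good f -> good g -> good (fun x => k1 * f x + k2 * g x).
Proof. by move=> gf gg; apply: goodD; apply: goodZ. Qed.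

End Good.

Section Integrals.
Context {R : realType}.
Notation mu := (@lebesgue_measure R).
Notation "'RI' D f" := (Rintegral mu D f) (at level 10, D at next level, f at next level).

Lemma sub_oc (x x' : R) : 0 <= x -> x' <= 1 -> `]x, x'] `<=` I01.
Proof. move=> h0 h1 t; rewrite /I01 /= !in_itv /= => /andP[? ?]; apply/andP; split; lra. Qed.
Lemma sub_cc (x x' : R) : 0 <= x -> x' <= 1 -> `[x, x'] `<=` I01.
Proof. move=> h0 h1 t; rewrite /I01 /= !in_itv /= => /andP[? ?]; apply/andP; split; lra. Qed.
Lemma sub_co (x x' : R) : 0 <= x -> x' <= 1 -> `[x, x'[ `<=` I01.
Proof. move=> h0 h1 t; rewrite /I01 /= !in_itv /= => /andP[? ?]; apply/andP; split; lra. Qed.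

Lemma int_split (f : R -> R) (x x' : R) : good f -> 0 <= x -> x <= x' -> x' <= 1 ->
  RI `[0, x'] f - RI `[0, x] f = RI `]x, x'] f.
Proof.
move=> gf h0 h1 h2.
apply: Rintegral_itvB; rewrite ?bnd_simp //.
by apply: good_int => //; apply: sub_cc.
Qed.

Lemma int_bound (f : R -> R) (x x' E : R) : good f -> 0 <= x -> x <= x' -> x' <= 1 ->
  0 <= E -> (forall t, x < t <= x' -> `|f t| <= E) ->
  `|RI `]x, x'] f| <= (x' - x) * E.
Proof.
move=> gf h0 h1 h2 hE hb.
have mD : measurable (`]x, x'] : set (measurableTypeR R)) by exact: measurable_itv.
have intf := good_int gf mD (sub_oc h0 h2).
apply: (le_trans (le_normr_Rintegral mD intf)).
have i1 : mu.-integrable `]x, x'] (EFin \o (fun t => `|f t|)) by exact: (integrable_abse intf).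
have i2 : mu.-integrable `]x, x'] (EFin \o (fun=> E)).
  by apply: good_int => //; [exact: good_cst | exact: sub_oc].
have hp : forall t, (`]x, x']%classic : set R) t -> `|f t| <= E by move=> t; rewrite /= in_itv /= => /hb.
apply: (@le_trans _ _ (RI `]x, x'] (fun=> E))).
  exact: (le_Rintegral mD i1 i2 hp).
rewrite Rintegral_cst //.
have hm2 : fine (mu `]x, x']) = x' - x.
  have := lebesgue_measure_itv `]x, x']; rewrite /=.
  case: ltP => hx -> /=; first by [].
  move: hx; rewrite lee_fin => hx.
  have -> : x' = x by apply/eqP; rewrite eq_le h1 hx.
  by rewrite subrr.
apply: (@le_trans _ _ (E * (x' - x))); last by rewrite mulrC.
by rewrite (_ : fine _ = x' - x) //; exact: hm2.
Qed.

Lemma int_lin (f g : R -> R) (D : set (measurableTypeR R)) k1 k2 : good f -> good g -> measurable D -> D `<=` I01 ->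
  RI D (fun t => k1 * f t + k2 * g t) = k1 * RI D f + k2 * RI D g.
Proof.
move=> gf gg mD DI.
rewrite RintegralD //; last 2 first.
- by apply: good_int => //; apply: goodZ.
- by apply: good_int => //; apply: goodZ.
by rewrite !RintegralZl //; apply: good_int.
Qed.

Lemma int0 (D : set (measurableTypeR R)) : measurable D -> RI D (fun=> (0:R)) = 0.
Proof. by move=> mD; rewrite Rintegral_cst // mul0r. Qed.

End Integrals.

Section Sols.
Context {R : realType}.
Notation mu := (@lebesgue_measure R).
Notation "'RI' D f" := (Rintegral mu D f) (at level 10, D at next level, f at next level).
Variables (a lam : R) (q : R -> R).
Hypothesis gq : good q.

Definition gy (y : R -> R) := fun t => (q t - lam) / a * y t.

Lemma good_gy y : good y -> good (gy y).
Proof.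
move=> g1; rewrite /gy.
have gg : good (fun t => a^-1 * q t + (- lam / a) * 1).
  by apply: good_lin => //; exact: good_cst.
have -> : (fun t => (q t - lam) / a * y t) = (fun t => (a^-1 * q t + (- lam / a) * 1) * y t).
  by apply/funext => t; ring.
by have := goodM gg g1.
Qed.

Definition dsol (y p : R -> R) :=
  [/\ good y, good p & forall x x', 0 <= x -> x <= x' -> x' <= 1 ->
    y x' - y x = RI `]x, x'] p /\ p x' - p x = RI `]x, x'] (gy y)].

Lemma sol_dsol y p : is_sol a q lam y p -> dsol y p.
Proof.
move=> [cy [cp hs]].
have g1 : good y by exact: cont_good.
have g2 : good p by exact: cont_good.
split => // x x' h0 h1 h2.
have hx : 0 <= x <= 1 by apply/andP; split => //; lra.
have hx' : 0 <= x' <= 1 by apply/andP; split => //; lra.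
have [e1 e2] := hs x hx; have [e3 e4] := hs x' hx'.
split.
  rewrite e1 e3 -(int_split g2 h0 h1 h2); ring.
rewrite e2 e4 -(int_split (good_gy g1) h0 h1 h2) /gy; ring.
Qed.

Lemma gy_lin k1 k2 y1 y2 :
  gy (fun t => k1 * y1 t + k2 * y2 t) = (fun t => k1 * gy y1 t + k2 * gy y2 t).
Proof. by apply/funext => t; rewrite /gy; ring. Qed.

Lemma dsol_lin k1 k2 y1 p1 y2 p2 : dsol y1 p1 -> dsol y2 p2 ->
  dsol (fun t => k1 * y1 t + k2 * y2 t) (fun t => k1 * p1 t + k2 * p2 t).
Proof.
move=> [gy1 gp1 h1] [gy2 gp2 h2].
split; [exact: good_lin | exact: good_lin |] => x x' h0 hxx h3.
have mD : measurable (`]x, x'] : set (measurableTypeR R)) by exact: measurable_itv.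
have sD := sub_oc h0 h3.
have [e1 e2] := h1 x x' h0 hxx h3; have [e3 e4] := h2 x x' h0 hxx h3.
split.
  by rewrite int_lin // -e1 -e3; ring.
by rewrite gy_lin int_lin //; [rewrite -e2 -e4; ring | apply: good_gy..].
Qed.

Lemma within_lin k1 k2 (f g : R -> R) : {within `[0, 1], continuous f} ->
  {within `[0, 1], continuous g} ->
  {within `[0, 1], continuous (fun t => k1 * f t + k2 * g t)}.
Proof.
move=> cf cg x.
apply: cvgD; apply: cvgM; by [exact: cvg_cst | exact: cf | exact: cg].
Qed.

Lemma is_sol_lin k1 k2 y1 p1 y2 p2 : is_sol a q lam y1 p1 -> is_sol a q lam y2 p2 ->
  is_sol a q lam (fun t => k1 * y1 t + k2 * y2 t) (fun t => k1 * p1 t + k2 * p2 t).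
Proof.
move=> s1 s2.
have [gy1 gp1 _] := sol_dsol s1; have [gy2 gp2 _] := sol_dsol s2.
move: s1 s2 => [cy1 [cp1 h1]] [cy2 [cp2 h2]].
split; first exact: within_lin.
split; first exact: within_lin.
move=> x hx.
have mD : measurable (`[0, x] : set (measurableTypeR R)) by exact: measurable_itv.
have sD : `[0, x] `<=` I01 by apply: sub_cc => //; case/andP: hx.
have [e1 e2] := h1 x hx; have [e3 e4] := h2 x hx.
split.
  by rewrite int_lin // e1 e3; ring.
have E : forall t, (q t - lam) / a * (k1 * y1 t + k2 * y2 t) = k1 * gy y1 t + k2 * gy y2 t.
  by move=> t; rewrite /gy; ring.
under eq_Rintegral => t _ do rewrite E.
by rewrite int_lin //; [rewrite e2 e4; ring | apply: good_gy..].
Qed.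

End Sols.

Section Uniq.
Context {R : realType}.
Notation mu := (@lebesgue_measure R).
Notation "'RI' D f" := (Rintegral mu D f) (at level 10, D at next level, f at next level).

Lemma small0 (v K : R) : (forall n : nat, n%:R * `|v| <= K) -> v = 0.
Proof.
move=> h; apply/eqP; apply/negPn/negP => hv.
have v0 : 0 < `|v| by rewrite normr_gt0.
have K0 : 0 <= K by have := h 0%N; rewrite mul0r.
have := archi_boundP (divr_ge0 K0 (ltW v0)).
rewrite ltr_pdivrMr // => h1.
have := h (Num.Def.archi_bound (K / `|v|)); lra.
Qed.

Lemma bound0 (v B : R) : (forall n : nat, `|v| <= B / 2 ^+ n) -> v = 0.
Proof.
move=> h; apply: (@small0 v B) => n.
have hn : (n%:R : R) <= 2 ^+ n by rewrite -natrX ler_nat; apply: ltnW; exact: ltn_expl.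
have h2 : 0 < (2:R) ^+ n by apply: exprn_gt0.
have := h n; rewrite ler_pdivlMr // => h3.
apply: le_trans h3; rewrite mulrC; apply: ler_wpM2l => //.
Qed.

Variables (a lam : R) (q : R -> R).
Hypothesis gq : good q.
Hypothesis a0 : 0 < a.

Lemma good_g : good (fun t => (q t - lam) / a).
Proof.
have gg : good (fun t => a^-1 * q t + (- lam / a) * 1).
  by apply: good_lin => //; exact: good_cst.
have -> : (fun t => (q t - lam) / a) = (fun t => a^-1 * q t + (- lam / a) * 1).
  by apply/funext => t; ring.
exact: gg.
Qed.

Lemma bound_ge0 (f : R -> R) M : (forall x, 0 <= x <= 1 -> `|f x| <= M) -> 0 <= M.
Proof. by move=> h; apply: le_trans (h 0 _); rewrite ?lexx ?ler01. Qed.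

Lemma dsol_uniq y p : dsol a lam q y p -> y 0 = 0 -> p 0 = 0 ->
  forall x, 0 <= x <= 1 -> y x = 0 /\ p x = 0.
Proof.
case=> [[my [By hBy]] [mp [Bp hBp]] hd] y0 p0.
have [_ [G hG]] := good_g.
have G0 := bound_ge0 hG.
have By0 := bound_ge0 hBy; have Bp0 := bound_ge0 hBp.
set B := By + Bp.
have hy : forall t, 0 <= t <= 1 -> `|y t| <= B by move=> t ht; have := hBy t ht; rewrite /B; lra.
have hp : forall t, 0 <= t <= 1 -> `|p t| <= B by move=> t ht; have := hBp t ht; rewrite /B; lra.
set d := (2 * (G + 1))^-1.
have d0 : 0 < d by rewrite /d invr_gt0; lra.
have dd : d * (2 * (G + 1)) = 1 by rewrite /d mulVf //; lra.
have gy_good : good (gy a lam q y) by apply: good_gy => //; split => //; exists By.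
have key : forall z, 0 <= z <= 1 -> (forall s, 0 <= s -> s <= z -> y s = 0 /\ p s = 0) ->
   forall n : nat, forall s, z < s -> s <= 1 -> s <= z + d ->
   `|y s| <= B / 2 ^+ n /\ `|p s| <= B / 2 ^+ n.
  move=> z /andP[z0 z1] hz; elim=> [|n IH] s zs s1 sd.
    rewrite expr0 divr1; split; [apply: hy | apply: hp]; apply/andP; split; lra.
  set E := B / 2 ^+ n.
  have E0 : 0 <= E by rewrite /E; apply: divr_ge0; [rewrite /B; lra | apply: exprn_ge0; lra].
  have hE : B / 2 ^+ n.+1 = E / 2 by rewrite /E exprS; field; apply: lt0r_neq0; apply: exprn_gt0; lra.
  rewrite hE.
  have [zy zp] := hz z z0 (lexx z).
  have [ey ep] := hd z s z0 (ltW zs) s1.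
  rewrite zy subr0 in ey; rewrite zp subr0 in ep.
  have b1 : `|RI `]z, s] p| <= (s - z) * E.
    apply: int_bound => //; [split=> // | lra | ].
    by exists Bp.
    move=> t /andP[zt ts]; have [_ i2] := IH t zt ltac:(lra) ltac:(lra); exact: i2.
  have b2 : `|RI `]z, s] (gy a lam q y)| <= (s - z) * (G * E).
    apply: int_bound => //; [lra | by apply: mulr_ge0 |].
    move=> t /andP[zt ts]; have [i1 _] := IH t zt ltac:(lra) ltac:(lra).
    rewrite /gy normrM; apply: ler_pM => //; apply: hG; apply/andP; split; lra.
  have sz0 : 0 <= s - z by lra.
  have sz : s - z <= d by lra.
  have c1 : (s - z) * E <= E / 2.
    apply: (@le_trans _ _ (d * E)); first exact: ler_wpM2r.
    have : d * E * (2 * (G + 1)) = E by rewrite mulrAC dd mul1r.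
    have : 0 <= d * E by apply: mulr_ge0 => //; lra.
    nra.
  have c2 : (s - z) * (G * E) <= E / 2.
    apply: (@le_trans _ _ (d * (G * E))); first by apply: ler_wpM2r => //; apply: mulr_ge0.
    have : d * (G * E) * (2 * (G + 1)) = G * E by rewrite mulrAC dd mul1r.
    have : 0 <= d * (G * E) by apply: mulr_ge0; [lra | apply: mulr_ge0].
    have : 0 <= d * E by apply: mulr_ge0 => //; lra.
    have : d * E * (2 * (G + 1)) = E by rewrite mulrAC dd mul1r.
    nra.
  by rewrite ey ep; split; [exact: le_trans b1 c1 | exact: le_trans b2 c2].
have zero_from : forall z, 0 <= z <= 1 -> (forall s, 0 <= s -> s <= z -> y s = 0 /\ p s = 0) ->
   forall s, z < s -> s <= 1 -> s <= z + d -> y s = 0 /\ p s = 0.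
  move=> z hz hz' s zs s1 sd; split.
    by apply: (@bound0 _ B) => n; have [] := key z hz hz' n s zs s1 sd.
  by apply: (@bound0 _ B) => n; have [] := key z hz hz' n s zs s1 sd.
have ind : forall k : nat, forall s, 0 <= s -> s <= 1 -> s <= k%:R * d -> y s = 0 /\ p s = 0.
  elim=> [|k IH] s s0 s1 sk.
    by have -> : s = 0 by rewrite mul0r in sk; lra.
  case: (lerP s (k%:R * d)) => hk; first exact: IH.
  have k0 : 0 <= k%:R * d by apply: mulr_ge0 => //; lra.
  apply: (zero_from (k%:R * d)) => //.
  - by apply/andP; split; lra.
  - by move=> s' s'0 s'k; apply: IH => //; lra.
  - by move: sk; rewrite -natr1 mulrDl mul1r.
move=> x /andP[x0 x1].
have d1 : 0 <= d^-1 by rewrite invr_ge0; lra.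
have := archi_boundP d1; set k := Num.Def.archi_bound _ => hk.
apply: (ind k) => //.
have : d^-1 * d = 1 by rewrite mulVf //; lra.
have : 0 < d := d0.
nra.
Qed.

End Uniq.

Section Wr.
Context {R : realType}.
Notation mu := (@lebesgue_measure R).
Notation "'RI' D f" := (Rintegral mu D f) (at level 10, D at next level, f at next level).

Lemma quad_const (F : R -> R) C :
  (forall x x', 0 <= x -> x <= x' -> x' <= 1 -> `|F x' - F x| <= C * (x' - x) ^+ 2) ->
  F 1 = F 0.
Proof.
move=> h.
have C0 : 0 <= C.
  have := h 0 1 (lexx 0) ler01 (lexx 1); rewrite subr0 expr1n mulr1.
  exact: le_trans (normr_ge0 _).
apply/eqP; rewrite -subr_eq0; apply/eqP; apply: (@small0 _ _ C) => n.
case: n => [|m]; first by rewrite mul0r.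
set N : R := m.+1%:R.
have N0 : 0 < N by rewrite /N ltr0n.
have step : forall k, (k <= m.+1)%N -> `|F (k%:R / N) - F 0| <= k%:R * (C / N ^+ 2).
  elim=> [|k IH] hk; first by rewrite mul0r subrr normr0 mul0r.
  have hk' : (k <= m.+1)%N by apply: ltnW.
  have kN : k.+1%:R <= N by rewrite /N ler_nat.
  have e1 : k.+1%:R / N - k%:R / N = N^-1 by rewrite -natr1; field; lra.
  have g1 : 0 <= k%:R / N by apply: divr_ge0; rewrite ?ler0n //; lra.
  have g2 : k%:R / N <= k.+1%:R / N by rewrite ler_pM2r ?invr_gt0 // ler_nat.
  have g3 : k.+1%:R / N <= 1 by rewrite ler_pdivrMr // mul1r.
  have h1 := h _ _ g1 g2 g3; rewrite e1 in h1.
  have h2 := IH hk'.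
  have tri : `|F (k.+1%:R / N) - F 0| <= `|F (k.+1%:R / N) - F (k%:R / N)| + `|F (k%:R / N) - F 0|.
    by rewrite (_ : F (k.+1%:R / N) - F 0 = (F (k.+1%:R / N) - F (k%:R / N)) + (F (k%:R / N) - F 0)); [exact: ler_normD | ring].
  have e2 : k.+1%:R * (C / N ^+ 2) = C * N^-1 ^+ 2 + k%:R * (C / N ^+ 2) by rewrite -natr1; field; lra.
  rewrite e2.
  by apply: (le_trans tri); apply: lerD.
have := step m.+1 (leqnn _).
rewrite -/N divff; last by lra.
move=> h3.
have e : N * (C / N ^+ 2) = C / N by field; lra.
rewrite e in h3.
by rewrite mulrC -ler_pdivlMr.
Qed.

Lemma nb (u1 v1 u2 v2 U V : R) : `|u1| <= U -> `|v1| <= V -> `|u2| <= U -> `|v2| <= V ->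
  `|u1 * v1 - u2 * v2| <= 2 * (U * V).
Proof.
move=> h1 h2 h3 h4.
apply: (le_trans (ler_normB _ _)); rewrite !normrM.
have : `|u1| * `|v1| <= U * V by apply: ler_pM.
have : `|u2| * `|v2| <= U * V by apply: ler_pM.
lra.
Qed.

Variables (a lam : R) (q : R -> R).
Hypothesis gq : good q.
Hypothesis a0 : 0 < a.

Lemma dsol_lip y p B G : dsol a lam q y p ->
  (forall t, 0 <= t <= 1 -> `|y t| <= B /\ `|p t| <= B) ->
  (forall t, 0 <= t <= 1 -> `|(q t - lam) / a| <= G) -> 0 <= B -> 0 <= G ->
  forall x t, 0 <= x -> x <= t -> t <= 1 ->
  `|y t - y x| <= (t - x) * B /\ `|p t - p x| <= (t - x) * (G * B).
Proof.
move=> [gy gp hd] hB hG B0 G0 x t x0 xt t1.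
have [e1 e2] := hd x t x0 xt t1.
rewrite e1 e2; split.
  apply: int_bound => // s /andP[xs st].
  by have [] := hB s ltac:(apply/andP; split; lra).
apply: int_bound => //; first exact: good_gy.
  exact: mulr_ge0.
move=> s /andP[xs st]; rewrite /gy normrM.
have hs : 0 <= s <= 1 by apply/andP; split; lra.
apply: ler_pM => //; first exact: hG.
by have [] := hB s hs.
Qed.

Lemma wronski y1 p1 y2 p2 : dsol a lam q y1 p1 -> dsol a lam q y2 p2 ->
  y1 1 * p2 1 - p1 1 * y2 1 = y1 0 * p2 0 - p1 0 * y2 0.
Proof.
move=> s1 s2.
have [[_ [b1 hb1]] [_ [b2 hb2]] hd1] := s1.
have [[_ [b3 hb3]] [_ [b4 hb4]] hd2] := s2.
have [_ [G hG]] := good_g a lam gq.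
have G0 := bound_ge0 hG.
have b10 := bound_ge0 hb1; have b20 := bound_ge0 hb2.
have b30 := bound_ge0 hb3; have b40 := bound_ge0 hb4.
set B := b1 + b2 + b3 + b4.
have B0 : 0 <= B by rewrite /B; lra.
have hB1 : forall t, 0 <= t <= 1 -> `|y1 t| <= B /\ `|p1 t| <= B.
  by move=> t ht; have := hb1 t ht; have := hb2 t ht; rewrite /B; split; lra.
have hB2 : forall t, 0 <= t <= 1 -> `|y2 t| <= B /\ `|p2 t| <= B.
  by move=> t ht; have := hb3 t ht; have := hb4 t ht; rewrite /B; split; lra.
have L1 := dsol_lip s1 hB1 hG B0 G0.
have L2 := dsol_lip s2 hB2 hG B0 G0.
apply: (@quad_const (fun t => y1 t * p2 t - p1 t * y2 t) (6 * G * B ^+ 2)).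
move=> x x' x0 xx x1.
set h := x' - x.
have h0 : 0 <= h by rewrite /h; lra.
have hx : 0 <= x <= 1 by apply/andP; split; lra.
have mD : measurable (`]x, x'] : set (measurableTypeR R)) by exact: measurable_itv.
have sD := sub_oc x0 x1.
have [gy1 gp1 _] := s1; have [gy2 gp2 _] := s2.
have [ey1 ep1] := hd1 x x' x0 xx x1.
have [ey2 ep2] := hd2 x x' x0 xx x1.
set Dy1 := RI `]x, x'] p1 in ey1.
set Dp1 := RI `]x, x'] (gy a lam q y1) in ep1.
set Dy2 := RI `]x, x'] p2 in ey2.
set Dp2 := RI `]x, x'] (gy a lam q y2) in ep2.
have eW : y1 x' * p2 x' - p1 x' * y2 x' - (y1 x * p2 x - p1 x * y2 x) =
   (y1 x * Dp2 - y2 x * Dp1) + (p2 x * Dy1 - p1 x * Dy2) + (Dy1 * Dp2 - Dy2 * Dp1).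
  rewrite -ey1 -ep1 -ey2 -ep2; ring.
have T1 : `|y1 x * Dp2 - y2 x * Dp1| <= h * (G * (2 * (B * (h * B)))).
  have -> : y1 x * Dp2 - y2 x * Dp1 =
     RI `]x, x'] (fun t => y1 x * gy a lam q y2 t + (- y2 x) * gy a lam q y1 t).
    rewrite int_lin //; [rewrite /Dp1 /Dp2; ring | apply: good_gy..] => //.
  apply: int_bound => //.
  - by apply: good_lin; apply: good_gy.
  - by apply: mulr_ge0 => //; apply: mulr_ge0 => //; apply: mulr_ge0 => //; apply: mulr_ge0.
  move=> t /andP[xt tx'].
  have ht : 0 <= t <= 1 by apply/andP; split; lra.
  rewrite /gy (_ : _ + _ = (q t - lam) / a * (y1 x * (y2 t - y2 x) - y2 x * (y1 t - y1 x))); last by ring.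
  rewrite normrM; apply: ler_pM => //; first exact: hG.
  have [l1 _] := L1 x t x0 (ltW xt) (le_trans tx' x1).
  have [l2 _] := L2 x t x0 (ltW xt) (le_trans tx' x1).
  apply: nb.
  - by have [] := hB1 x hx.
  - apply: le_trans l2 _; apply: ler_wpM2r => //; rewrite /h; lra.
  - by have [] := hB2 x hx.
  - apply: le_trans l1 _; apply: ler_wpM2r => //; rewrite /h; lra.
have T2 : `|p2 x * Dy1 - p1 x * Dy2| <= h * (2 * (B * (h * (G * B)))).
  have -> : p2 x * Dy1 - p1 x * Dy2 =
     RI `]x, x'] (fun t => p2 x * p1 t + (- p1 x) * p2 t).
    by rewrite int_lin //; rewrite /Dy1 /Dy2; ring.
  apply: int_bound => //.
  - exact: good_lin.
  - by apply: mulr_ge0 => //; apply: mulr_ge0 => //; apply: mulr_ge0 => //; apply: mulr_ge0.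
  move=> t /andP[xt tx'].
  rewrite (_ : _ + _ = p2 x * (p1 t - p1 x) - p1 x * (p2 t - p2 x)); last by ring.
  have [_ l1] := L1 x t x0 (ltW xt) (le_trans tx' x1).
  have [_ l2] := L2 x t x0 (ltW xt) (le_trans tx' x1).
  have GB0 : 0 <= G * B by apply: mulr_ge0.
  apply: nb.
  - by have [] := hB2 x hx.
  - apply: le_trans l1 _; apply: ler_wpM2r => //; rewrite /h; lra.
  - by have [] := hB1 x hx.
  - apply: le_trans l2 _; apply: ler_wpM2r => //; rewrite /h; lra.
have T3 : `|Dy1 * Dp2 - Dy2 * Dp1| <= 2 * ((h * B) * (h * (G * B))).
  have [l1 l2] := L1 x x' x0 xx x1.
  have [l3 l4] := L2 x x' x0 xx x1.
  by apply: nb; rewrite -?ey1 -?ep1 -?ey2 -?ep2.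
rewrite eW.
apply: (le_trans (ler_normD _ _)).
apply: (@le_trans _ _ (`|y1 x * Dp2 - y2 x * Dp1| + `|p2 x * Dy1 - p1 x * Dy2| + `|Dy1 * Dp2 - Dy2 * Dp1|)).
  by rewrite lerD2r; exact: ler_normD.
rewrite -/h (_ : 6 * G * B ^+ 2 * h ^+ 2 = h * (G * (2 * (B * (h * B)))) + h * (2 * (B * (h * (G * B)))) + 2 * ((h * B) * (h * (G * B)))); last by ring.
by apply: lerD; [apply: lerD|].
Qed.

End Wr.

Section Refl.
Context {R : realType}.
Notation mu := (@lebesgue_measure R).
Notation "'RI' D f" := (Rintegral mu D f) (at level 10, D at next level, f at next level).

Definition phi (t : measurableTypeR R) : measurableTypeR R := 1 - t.

Lemma mphi : measurable_fun setT phi.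
Proof.
apply: continuous_measurable_fun => t.
by apply: cvgB; [exact: cvg_cst | exact: cvg_id].
Qed.

Definition rmu := pushforward mu phi.

Let rmu0 : rmu set0 = 0%E.
Proof. by rewrite /rmu /pushforward preimage_set0 measure0. Qed.

Let rmu_ge0 A : (0 <= rmu A)%E.
Proof. by rewrite /rmu /pushforward; exact: measure_ge0. Qed.

Let rmu_sigma : semi_sigma_additive rmu.
Proof.
move=> F mF tF mUF; rewrite /rmu /pushforward preimage_bigcup.
apply: measure_semi_sigma_additive.
- by move=> n; rewrite -[X in measurable X]setTI; exact: mphi.
- apply/trivIsetP => /= i j _ _ ij; rewrite -preimage_setI.
  by move/trivIsetP : tF => /(_ _ _ _ _ ij) ->//; rewrite preimage_set0.
- by rewrite -preimage_bigcup -[X in measurable X]setTI; exact: mphi.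
Qed.

HB.instance Definition _ := isMeasure.Build _ _ _ rmu rmu0 rmu_ge0 rmu_sigma.

Lemma rmu_eq A : measurable A -> mu A = rmu A.
Proof.
apply: lebesgue_measure_unique => X [[u v] _ <-] /=.
rewrite /rmu /pushforward.
have -> : phi @^-1` `]u, v]%classic = `[1 - v, 1 - u[%classic.
  apply/seteqP; split => t; rewrite /= /phi !in_itv /= => /andP[h1 h2]; apply/andP; split; lra.
rewrite !lebesgue_measure_itv /= !lte_fin.
have -> : (1 - v < 1 - u) = (u < v) by apply/idP/idP; lra.
by case: ifP => // _; congr (EFin _); ring.
Qed.


Lemma good_refl (f : R -> R) : good f -> good (fun t => f (1 - t)).
Proof.
move=> [mf [M hM]]; split.
  have mI : measurable (I01 : set R) by rewrite /I01; exact: measurable_itv.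
  have hsub : phi @` I01 `<=` I01.
    by move=> _ [t ht <-]; move/I01P : ht => ht; apply/I01P; rewrite /phi; lra.
  have mp : measurable_fun I01 phi by apply: measurable_funS mphi => //.
  exact: (measurable_comp mI hsub mf mp).
exists M => t ht; apply: hM; lra.
Qed.

Lemma CV (f : R -> R) (x x' : R) : good f -> 0 <= x -> x <= x' -> x' <= 1 ->
  RI `]x, x'] (fun t => f (1 - t)) = RI `]1 - x', 1 - x] f.
Proof.
move=> gf h0 h1 h2.
have gr := good_refl gf.
have [mf _] := gf.
have mI : measurable (I01 : set (measurableTypeR R)) by rewrite /I01; exact: measurable_itv.
rewrite Rintegral_itv_obnd_cbnd; last by apply: good_int gr _ _; [exact: measurable_itv | exact: sub_oc].
rewrite -Rintegral_itv_bndo_bndc; last by apply: good_int gr _ _; [exact: measurable_itv | exact: sub_co].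
rewrite /Rintegral; congr fine; symmetry.
set D : set (measurableTypeR R) := `]1 - x', 1 - x]%classic.
have mD : measurable D by exact: measurable_itv.
have DI : D `<=` I01 by apply: sub_oc; lra.
transitivity (\int[mu]_(t in D) ((f \_ I01) t)%:E)%E.
  apply: eq_integral => t /[!inE] tD; rewrite patchE.
  by rewrite mem_set //; exact: DI.
transitivity (\int[rmu]_(t in D) ((f \_ I01) t)%:E)%E.
  by apply: eq_measure_integral => A mA _; exact: rmu_eq.
have pre : phi @^-1` D = `[x, x'[%classic.
  apply/seteqP; split => t; rewrite /D /= /phi !in_itv /= => /andP[u1 u2]; apply/andP; split; lra.
have mf' : measurable_fun setT (EFin \o (f \_ I01)).
  by apply/measurable_EFinP; apply/(measurable_restrictT _ mI).
have int' : mu.-integrable (phi @^-1` D) ((EFin \o (f \_ I01)) \o phi).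
  rewrite pre.
  have mxx : measurable (`[x, x'[%classic : set (measurableTypeR R)) by exact: measurable_itv.
  apply: (eq_integrable mxx (EFin \o (fun t => f (1 - t)))).
  - move=> t /[!inE] tD /=; rewrite patchE mem_set //.
    by move: tD; rewrite /= in_itv /= /phi => /andP[? ?]; apply/I01P; lra.
  - by apply: good_int gr _ _; [exact: measurable_itv | exact: sub_co].
rewrite (integral_pushforward mphi mf' int' mD) pre.
apply: eq_integral => t /[!inE] tD /=; rewrite patchE mem_set //.
by move: tD; rewrite /= in_itv /= /phi => /andP[? ?]; apply/I01P; lra.
Qed.

End Refl.

Section Refl2.
Context {R : realType}.
Notation mu := (@lebesgue_measure R).
Notation "'RI' D f" := (Rintegral mu D f) (at level 10, D at next level, f at next level).
Variables (a lam : R) (q : R -> R).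
Hypothesis gq : good q.
Hypothesis qsym : forall t, 0 <= t <= 1 -> q t = q (1 - t).

Lemma int_opp (f : R -> R) (D : set (measurableTypeR R)) : good f -> measurable D -> D `<=` I01 ->
  RI D (fun t => - f t) = - RI D f.
Proof.
move=> gf mD DI.
rewrite (_ : (fun t => - f t) = (fun t => -1 * f t + 0 * f t)); last by apply/funext => t; ring.
by rewrite int_lin //; ring.
Qed.

Lemma dsol_refl y p : dsol a lam q y p ->
  dsol a lam q (fun t => y (1 - t)) (fun t => - p (1 - t)).
Proof.
move=> [gyy gp hd]; split.
- exact: good_refl.
- have := goodZ (-1) (good_refl gp).
  by rewrite (_ : (fun x => -1 * p (1 - x)) = (fun t => - p (1 - t))) //; apply/funext => t; ring.
move=> x x' h0 h1 h2.
have [e1 e2] := hd (1 - x') (1 - x) ltac:(lra) ltac:(lra) ltac:(lra).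
have mD : measurable (`]x, x'] : set (measurableTypeR R)) by exact: measurable_itv.
have sD := sub_oc h0 h2.
split.
  rewrite int_opp //; last exact: good_refl.
  by rewrite CV // -e1; ring.
have E : forall t, t \in (`]x, x']%classic : set (measurableTypeR R)) -> gy a lam q (fun t => y (1 - t)) t = gy a lam q y (1 - t).
  move=> t /[!inE] tD; rewrite /gy qsym //; apply/I01P; exact: sD.
rewrite (eq_Rintegral _ E) CV //; last exact: good_gy.
by rewrite -e2; ring.
Qed.

End Refl2.

Section Mono.
Context {R : realType}.
Notation mu := (@lebesgue_measure R).
Notation "'RI' D f" := (Rintegral mu D f) (at level 10, D at next level, f at next level).
Variables (a lam : R) (q : R -> R).
Hypothesis gq : good q.
Hypothesis a0 : 0 < a.
Variables (c cp s sp : R -> R).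
Hypothesis sc : dsol a lam q c cp.
Hypothesis ss : dsol a lam q s sp.
Hypotheses (c0 : c 0 = 1) (cp0 : cp 0 = 0) (s0 : s 0 = 0) (sp0 : sp 0 = 1).

Lemma rep y p : dsol a lam q y p -> forall x, 0 <= x <= 1 ->
  y x = y 0 * c x + p 0 * s x /\ p x = y 0 * cp x + p 0 * sp x.
Proof.
move=> sy x hx.
have sw := dsol_lin gq (y 0) (p 0) sc ss.
have sz := dsol_lin gq 1 (-1) sy sw.
have [] := dsol_uniq gq sz _ _ hx.
- by rewrite /= c0 s0; ring.
- by rewrite /= cp0 sp0; ring.
by move=> h1 h2; split; lra.
Qed.

Lemma wr1 : c 1 * sp 1 - cp 1 * s 1 = 1.
Proof. by rewrite (wronski gq sc ss) c0 cp0 s0 sp0; ring. Qed.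

Hypothesis qsym : forall t, 0 <= t <= 1 -> q t = q (1 - t).

Lemma sym1 : sp 1 = c 1.
Proof.
have h01 : 0 <= (1:R) <= 1 by rewrite ler01 lexx.
have [A _] := rep (dsol_refl gq qsym sc) h01.
have [_ B] := rep (dsol_refl gq qsym ss) h01.
rewrite /= subrr subr0 c0 in A; rewrite /= subrr subr0 sp0 in B.
have W := wr1.
have : (c 1 - sp 1) ^+ 2 = 0.
  have -> : (c 1 - sp 1) ^+ 2 = (c 1 * c 1 + - cp 1 * s 1 - 1) - 2 * (c 1 * sp 1 - cp 1 * s 1 - 1)
      + (sp 1 * sp 1 - s 1 * cp 1 - 1) by ring.
  rewrite -A W; rewrite (_ : sp 1 * sp 1 - s 1 * cp 1 - 1 = (- 1 - (s 1 * cp 1 + - sp 1 * sp 1))); last by ring.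
  rewrite -B; ring.
by move/eqP; rewrite sqrf_eq0 subr_eq0 => /eqP ->.
Qed.

End Mono.

Section Alg.
Variable F : idomainType.
Variables (r c1 cp1 s1 A L e2 e3 f2 f3 a1 a2 a3 b1 b2 b3 w0 w1 : F).
Let D1 := c1 + r * cp1.
Let D2 := s1 + r * c1.
Let D0 := D2 + r * D1.
Let K := 3 * A * D1 - L * D0.
Let hW := c1 * c1 - cp1 * s1 - 1.
Let he2 := e2 * f2 - 1.
Let he3 := e3 * f3 - 1.
Let h01 := a1 - r * b1 - w0.
Let h02 := a2 - r * b2 - w0.
Let h03 := a3 - r * b3 - w0.
Let hA := A * (b1 + b2 + b3) + L * w0.
Let hB1 := (a1 * D1 + b1 * D2) - w1.
Let hB2 := e2 * (a2 * D1 + b2 * D2) - w1.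
Let hB3 := e3 * (a3 * D1 + b3 * D2) - w1.
Let hC := A * ((a1 * cp1 + b1 * c1) + e2 * (a2 * cp1 + b2 * c1) + e3 * (a3 * cp1 + b3 * c1)) - L * w1.
Let Q1 := hB1 - D1 * h01.
Let Q2 := f2 * hB2 - (a2 * D1 + b2 * D2) * he2 - D1 * h02.
Let Q3 := f3 * hB3 - (a3 * D1 + b3 * D2) * he3 - D1 * h03.

Lemma Qid1 : w0 * D1 + b1 * D0 - w1 = Q1.
Proof. rewrite /Q1 /hB1 /h01 /D0 /D1 /D2; ring. Qed.
Lemma Qid2 : w0 * D1 + b2 * D0 - f2 * w1 = Q2.
Proof. rewrite /Q2 /hB2 /h02 /he2 /D0 /D1 /D2; ring. Qed.
Lemma Qid3 : w0 * D1 + b3 * D0 - f3 * w1 = Q3.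
Proof. rewrite /Q3 /hB3 /h03 /he3 /D0 /D1 /D2; ring. Qed.

Lemma id1 : A * (1 + f2 + f3) * w1 - K * w0 = - A * (Q1 + Q2 + Q3) + D0 * hA.
Proof. rewrite -Qid1 -Qid2 -Qid3 /K /hA /D0 /D1 /D2; ring. Qed.

Lemma id2 : A * (1 + e2 + e3) * w0 - K * w1 =
  - D0 * (hC - A * cp1 * (h01 + e2 * h02 + e3 * h03)) - A * (1 + e2 + e3) * w0 * hW
  + A * D1 * ((he2 + he3) * w1 + Q1 + e2 * Q2 + e3 * Q3).
Proof. rewrite -Qid1 -Qid2 -Qid3 /K /hC /h01 /h02 /h03 /hW /he2 /he3 /D0 /D1 /D2; ring. Qed.


Hypotheses (HW : hW = 0) (He2 : he2 = 0) (He3 : he3 = 0)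
  (H01 : h01 = 0) (H02 : h02 = 0) (H03 : h03 = 0)
  (HB1 : hB1 = 0) (HB2 : hB2 = 0) (HB3 : hB3 = 0).

Lemma Qz : [/\ w0 * D1 + b1 * D0 = w1, w0 * D1 + b2 * D0 = f2 * w1 & w0 * D1 + b3 * D0 = f3 * w1].
Proof.
have q1 : Q1 = 0 by rewrite /Q1 HB1 H01; ring.
have q2 : Q2 = 0 by rewrite /Q2 HB2 H02 He2; ring.
have q3 : Q3 = 0 by rewrite /Q3 HB3 H03 He3; ring.
by split; apply/eqP; rewrite -subr_eq0; apply/eqP; rewrite ?Qid1 ?Qid2 ?Qid3.
Qed.

Lemma fwd : hA = 0 -> hC = 0 ->
  A * (1 + f2 + f3) * w1 = K * w0 /\ A * (1 + e2 + e3) * w0 = K * w1.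
Proof.
move=> HA HC.
have q1 : Q1 = 0 by rewrite /Q1 HB1 H01; ring.
have q2 : Q2 = 0 by rewrite /Q2 HB2 H02 He2; ring.
have q3 : Q3 = 0 by rewrite /Q3 HB3 H03 He3; ring.
split; apply/eqP; rewrite -subr_eq0; apply/eqP.
  by rewrite id1 q1 q2 q3 HA; ring.
by rewrite id2 q1 q2 q3 HC H01 H02 H03 HW He2 He3; ring.
Qed.

Lemma bwd : D0 != 0 -> A * (1 + f2 + f3) * w1 = K * w0 -> A * (1 + e2 + e3) * w0 = K * w1 ->
  hA = 0 /\ hC = 0.
Proof.
move=> D00 E1 E2.
have q1 : Q1 = 0 by rewrite /Q1 HB1 H01; ring.
have q2 : Q2 = 0 by rewrite /Q2 HB2 H02 He2; ring.
have q3 : Q3 = 0 by rewrite /Q3 HB3 H03 He3; ring.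
have i1 := id1; rewrite E1 subrr q1 q2 q3 in i1.
have i2 := id2; rewrite E2 subrr q1 q2 q3 H01 H02 H03 HW He2 He3 in i2.
split.
  have e : D0 * hA = - A * (0 + 0 + 0) + D0 * hA by ring.
  rewrite -i1 in e; move/eqP: e; rewrite mulf_eq0 (negbTE D00) /=; exact/eqP.
set X := hC - A * cp1 * (0 + e2 * 0 + e3 * 0).
have e : D0 * X = 0.
  transitivity (- (- D0 * X - K * w1 * 0 + A * D1 * ((0 + 0) * w1 + 0 + e2 * 0 + e3 * 0))); first ring.
  by rewrite /X -i2 oppr0.
move/eqP: e; rewrite mulf_eq0 (negbTE D00) /= /X => /eqP hX.
by transitivity (hC - A * cp1 * (0 + e2 * 0 + e3 * 0)); [ring | exact: hX].
Qed.

End Alg.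

Section Cx.
Context {R : realType}.
Implicit Types (z w : R[i]) (x y : R).

Lemma ceqP z w : complex.Re z = complex.Re w -> complex.Im z = complex.Im w -> z = w.
Proof. by case: z => ? ?; case: w => ? ? /= -> ->. Qed.

Lemma ReD z w : complex.Re (z + w) = complex.Re z + complex.Re w.
Proof. by case: z => ? ?; case: w. Qed.
Lemma ImD z w : complex.Im (z + w) = complex.Im z + complex.Im w.
Proof. by case: z => ? ?; case: w. Qed.
Lemma ReMr z x : complex.Re (z * x%:C)%C = complex.Re z * x.
Proof. by case: z => ? ? /=; ring. Qed.
Lemma ImMr z x : complex.Im (z * x%:C)%C = complex.Im z * x.
Proof. by case: z => ? ? /=; ring. Qed.
Lemma cM x y : ((x * y)%:C = x%:C * y%:C)%C.
Proof. by rewrite rmorphM. Qed.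
Lemma cD x y : ((x + y)%:C = x%:C + y%:C)%C.
Proof. by rewrite rmorphD. Qed.
Lemma cB x y : ((x - y)%:C = x%:C - y%:C)%C.
Proof. by rewrite rmorphB. Qed.
Lemma c1 : (1%:C = 1 :> R[i])%C.
Proof. by rewrite rmorph1. Qed.
Lemma cinj x y : (x%:C = y%:C)%C -> x = y.
Proof. by case. Qed.

Lemma expiN (t : R) : expi t * expi (- t) = 1.
Proof.
rewrite /expi cosN sinN; apply: ceqP => /=.
  by rewrite -(cos2Dsin2 t); ring.
ring.
Qed.

Definition Sb (t1 t2 : R) : R[i] := 1 + expi t1 + expi t2.

Lemma S_Sb t1 t2 : Sfun t1 t2 * Sb t1 t2 = ((Normc.normc (Sfun t1 t2)) ^+ 2)%:C%C.
Proof.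
rewrite /Sfun /Sb /expi !cosN !sinN /=.
rewrite sqr_sqrtr; last by rewrite addr_ge0 // sqr_ge0.
apply: ceqP => /=; ring.
Qed.

Lemma S0_Sb0 t1 t2 : Sfun t1 t2 = 0 -> Sb t1 t2 = 0.
Proof.
rewrite /Sfun /Sb /expi !cosN !sinN => h.
have h1 := f_equal (@complex.Re R) h; have h2 := f_equal (@complex.Im R) h.
move: h1 h2 => /= h1 h2.
apply: ceqP => /=; lra.
Qed.

End Cx.

Section Fin.
Context {R : realType}.
Notation mu := (@lebesgue_measure R).
Notation "'RI' D f" := (Rintegral mu D f) (at level 10, D at next level, f at next level).
Variables (a lam : R) (q : R -> R).
Hypothesis gq : good q.
Hypothesis a0 : 0 < a.
Variables (c cp s sp : R -> R).
Hypothesis hc : is_sol a q lam c cp.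
Hypothesis hs : is_sol a q lam s sp.
Hypotheses (c0 : c 0 = 1) (cp0 : cp 0 = 0) (s0 : s 0 = 0) (sp0 : sp 0 = 1).

Lemma int_one : RI `]0, 1] (fun=> (1:R)) = 1.
Proof.
rewrite Rintegral_cst; last exact: measurable_itv.
have hm2 : fine (mu `]0, 1]) = 1.
  have := lebesgue_measure_itv `]0, (1:R)]; rewrite /= lte01 => -> /=.
  by rewrite subr0.
by rewrite (_ : fine _ = 1) ?mul1r //; exact: hm2.
Qed.

Lemma D0nz (rho : R) : ~ in_Sigma0 a rho q lam ->
  (s 1 + rho * sp 1) + rho * (c 1 + rho * cp 1) != 0.
Proof.
move=> nS; apply/eqP => hD; apply: nS.
set y := fun t => rho * c t + 1 * s t.
set p := fun t => rho * cp t + 1 * sp t.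
have sy : is_sol a q lam y p by exact: is_sol_lin.
exists y, p; split => //; split.
  by rewrite /y /p c0 s0 cp0 sp0; ring.
split.
  by transitivity ((s 1 + rho * sp 1) + rho * (c 1 + rho * cp 1)); [rewrite /y /p; ring | exact: hD].
case: (pselect (exists x, 0 <= x <= 1 /\ y x != 0)) => // hnot.
exfalso.
have y0 : forall x, 0 <= x <= 1 -> y x = 0.
  move=> x hx; apply/eqP; apply/negPn/negP => hy; apply: hnot; by exists x.
have [gyy gp hd] := sol_dsol gq sy.
have p1 : forall x, 0 <= x <= 1 -> p x = 1.
  move=> x /andP[x0 x1].
  have [_ e] := hd 0 x (lexx 0) x0 x1.
  have : RI `]0, x] (gy a lam q y) = 0.
    rewrite (@eq_Rintegral _ _ _ mu _ (fun=> 0)); first by apply: int0; exact: measurable_itv.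
    move=> t /[!inE]; rewrite /= in_itv /= => /andP[t0 t1].
    by rewrite /gy y0 ?mulr0 //; apply/andP; split; lra.
  rewrite -e => /eqP; rewrite subr_eq0 => /eqP ->.
  by rewrite /p cp0 sp0; ring.
have h01 : (0:R) <= 1 by exact: ler01.
have [e _] := hd 0 1 (lexx 0) h01 (lexx 1).
rewrite (@eq_Rintegral _ _ _ mu _ (fun=> 1)) in e; last first.
  move=> t /[!inE]; rewrite /= in_itv /= => /andP[t0 t1].
  by apply: p1; apply/andP; split; lra.
rewrite int_one y0 ?y0 ?subrr in e; last 2 first.
- by rewrite lexx ler01.
- by rewrite lexx ler01.
by move/eqP: e; rewrite eq_sym oner_eq0.
Qed.


Lemma crep (u up : R -> R[i]) : is_csol a q lam u up -> forall x, 0 <= x <= 1 ->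
  u x = (u 0 * (c x)%:C + up 0 * (s x)%:C)%C /\ up x = (u 0 * (cp x)%:C + up 0 * (sp x)%:C)%C.
Proof.
move=> [h1 h2] x hx.
have dc := sol_dsol gq hc; have ds := sol_dsol gq hs.
have [r1 r2] := rep gq dc ds c0 cp0 s0 sp0 (sol_dsol gq h1) hx.
have [i1 i2] := rep gq dc ds c0 cp0 s0 sp0 (sol_dsol gq h2) hx.
by split; apply: ceqP; rewrite ?r1 ?i1 ?r2 ?i2; case: (u 0) => ? ?; case: (up 0) => ? ? /=; ring.
Qed.

Lemma cis_sol (al be : R[i]) :
  is_csol a q lam (fun x => al * (c x)%:C + be * (s x)%:C)%C
                  (fun x => al * (cp x)%:C + be * (sp x)%:C)%C.
Proof.
split.
  have := is_sol_lin gq (complex.Re al) (complex.Re be) hc hs.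
  congr is_sol; apply/funext => t; case: al => ? ?; case: be => ? ? /=; ring.
have := is_sol_lin gq (complex.Im al) (complex.Im be) hc hs.
congr is_sol; apply/funext => t; case: al => ? ?; case: be => ? ? /=; ring.
Qed.

Lemma U0 (al be : R[i]) : (al * (c 0)%:C + be * (s 0)%:C = al)%C.
Proof. by rewrite c0 s0; case: al => ? ?; case: be => ? ?; apply: ceqP => /=; ring. Qed.
Lemma P0 (al be : R[i]) : (al * (cp 0)%:C + be * (sp 0)%:C = be)%C.
Proof. by rewrite cp0 sp0; case: al => ? ?; case: be => ? ?; apply: ceqP => /=; ring. Qed.

End Fin.

Unset Implicit Arguments. Set Strict Implicit.

Theorem mainTheorem2 (R : realType) (a kinv m : R) (q0 : R -> R) :
  0 < a -> 0 <= kinv -> 0 <= m ->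
  measurable_fun (`[0, 1] : set R) q0 ->
  (exists M : R, forall x : R, 0 <= x <= 1 -> `|q0 x| <= M) ->
  (forall x : R, 0 <= x <= 1 -> q0 x = q0 (1 - x)) ->
  forall lam : R, ~ in_Sigma0 a (a * kinv) q0 lam ->
  forall c cp s sp : R -> R,
    is_sol a q0 lam c cp -> c 0 = 1 -> cp 0 = 0 ->
    is_sol a q0 lam s sp -> s 0 = 0 -> sp 0 = 1 ->
  let rho := a * kinv in
  let D1 := c 1 + rho * cp 1 in
  let D2 := s 1 + rho * sp 1 in
  let D0 := D2 + rho * D1 in
  (in_spec a rho m q0 lam <->
   exists th1 th2 : R, -pi <= th1 <= pi /\ -pi <= th2 <= pi /\
     (D1 - lam * m / (3 * a) * D0 = Normc.normc (Sfun th1 th2) / 3 \/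
      D1 - lam * m / (3 * a) * D0 = - (Normc.normc (Sfun th1 th2) / 3))).
Proof.
move=> a0 _ _ mq bq qsym lam nS c cp s sp hc c0 cp0 hs s0 sp0 rho D1 D2 D0.
have gq : good q0 by split.
have dc := sol_dsol gq hc; have ds := sol_dsol gq hs.
have W := wr1 gq dc ds c0 cp0 s0 sp0.
have SY := sym1 gq dc ds c0 cp0 s0 sp0 qsym.
have D0nz' : D0 != 0 by exact: (D0nz gq hc hs c0 cp0 s0 sp0 nS).
have h11 : 0 <= (1:R) <= 1 by rewrite ler01 lexx.
pose rC : R[i] := rho%:C%C.
pose c1C : R[i] := (c 1)%:C%C.
pose cp1C : R[i] := (cp 1)%:C%C.
pose s1C : R[i] := (s 1)%:C%C.
pose AC : R[i] := a%:C%C.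
pose LC : R[i] := (lam * m)%:C%C.
pose D1C := c1C + rC * cp1C.
pose D2C := s1C + rC * c1C.
pose D0C := D2C + rC * D1C.
pose KC := 3 * AC * D1C - LC * D0C.
pose Kr := 3 * a * D1 - lam * m * D0.
have HW : c1C * c1C - cp1C * s1C - 1 = 0.
  rewrite SY in W; apply: ceqP => /=; last by ring.
  lra.
have D0Cr : D0C = D0%:C%C.
  by apply: ceqP; rewrite /D0C /D2C /D1C /D0 /D2 /D1 SY /= ; ring.
have KCr : KC = Kr%:C%C.
  by apply: ceqP; rewrite /KC /D0C /D2C /D1C /Kr /D0 /D2 /D1 SY /= ; ring.
have D0C0 : D0C != 0.
  rewrite D0Cr; apply/eqP => h; move/eqP: D0nz'; apply.
  by have := f_equal (@complex.Re R) h.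
have He : forall t : R, expi t * expi (- t) - 1 = 0 by move=> t; rewrite expiN subrr.
have KS_real : forall t1 t2, KC ^+ 2 = AC ^+ 2 * (Sfun t1 t2 * Sb t1 t2) ->
    Kr ^+ 2 = (a * Normc.normc (Sfun t1 t2)) ^+ 2.
  move=> t1 t2; rewrite S_Sb KCr => h.
  rewrite /AC -!rmorphXn -rmorphM in h.
  by case: h => ->; rewrite exprMn.
have fin : forall N, Kr ^+ 2 = (a * N) ^+ 2 ->
   D1 - lam * m / (3 * a) * D0 = N / 3 \/ D1 - lam * m / (3 * a) * D0 = - (N / 3).
  have an : a != 0 by apply: lt0r_neq0.
  have a3 : 3 * a != 0 by rewrite mulf_neq0 // lt0r_neq0 //; lra.
  move=> N /eqP; rewrite eqf_sqr => /orP[] /eqP hK; [left|right]; apply: (mulfI a3).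
    by transitivity Kr; [rewrite /Kr; field | rewrite hK; field].
  by transitivity Kr; [rewrite /Kr; field | rewrite hK; field].
split.
- case=> th1 [th2 [hth1 [hth2 [u1 [p1 [u2 [p2 [u3 [p3 [w0 [w1 [[cs1 cs2 cs3] [nt [[e01 e02 e03] [eA [[eB1 eB2 eB3] eC]]]]]]]]]]]]]]]].
  exists th1, th2; split => //; split => //.
  have [U1 P1] := crep gq hc hs c0 cp0 s0 sp0 cs1 h11.
  have [U2 P2] := crep gq hc hs c0 cp0 s0 sp0 cs2 h11.
  have [U3 P3] := crep gq hc hs c0 cp0 s0 sp0 cs3 h11.
  rewrite SY in P1 P2 P3.
  have H01 : u1 0 - rC * p1 0 - w0 = 0 by rewrite e01 subrr.
  have H02 : u2 0 - rC * p2 0 - w0 = 0 by rewrite e02 subrr.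
  have H03 : u3 0 - rC * p3 0 - w0 = 0 by rewrite e03 subrr.
  have HB1 : (u1 0 * D1C + p1 0 * D2C) - w1 = 0 by rewrite -eB1 U1 P1 /D1C /D2C; ring.
  have HB2 : expi th1 * (u2 0 * D1C + p2 0 * D2C) - w1 = 0 by rewrite -eB2 U2 P2 /D1C /D2C; ring.
  have HB3 : expi th2 * (u3 0 * D1C + p3 0 * D2C) - w1 = 0 by rewrite -eB3 U3 P3 /D1C /D2C; ring.
  have HA : AC * (p1 0 + p2 0 + p3 0) + LC * w0 = 0 by rewrite -eA /AC /LC; ring.
  have HC : AC * ((u1 0 * cp1C + p1 0 * c1C) + expi th1 * (u2 0 * cp1C + p2 0 * c1C)
      + expi th2 * (u3 0 * cp1C + p3 0 * c1C)) - LC * w1 = 0.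
    by rewrite -eC P1 P2 P3 /AC /LC; ring.
  have [E1 E2] := @fwd _ rC c1C cp1C s1C AC LC (expi th1) (expi th2) (expi (-th1)) (expi (-th2))
     (u1 0) (u2 0) (u3 0) (p1 0) (p2 0) (p3 0) w0 w1 HW (He th1) (He th2) H01 H02 H03 HB1 HB2 HB3 HA HC.
  have E1' : AC * Sfun th1 th2 * w1 = KC * w0 := E1.
  have E2' : AC * Sb th1 th2 * w0 = KC * w1 := E2.
  apply: fin; apply: (KS_real th1 th2).
  set S := Sfun th1 th2; set T := Sb th1 th2.
  have e0 : (KC ^+ 2 - AC ^+ 2 * (S * T)) * w0 = 0.
    transitivity (KC * (KC * w0 - AC * S * w1) + AC * S * (KC * w1 - AC * T * w0)); first ring.
    by rewrite -E1' -E2' !subrr !mulr0 addr0.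
  have e1 : (KC ^+ 2 - AC ^+ 2 * (S * T)) * w1 = 0.
    transitivity (KC * (KC * w1 - AC * T * w0) + AC * T * (KC * w0 - AC * S * w1)); first ring.
    by rewrite -E1' -E2' !subrr !mulr0 addr0.
  have [w0z|w0nz] := eqVneq w0 0; last first.
    by move/eqP: e0; rewrite mulf_eq0 (negbTE w0nz) orbF subr_eq0 => /eqP.
  have [w1z|w1nz] := eqVneq w1 0; last first.
    by move/eqP: e1; rewrite mulf_eq0 (negbTE w1nz) orbF subr_eq0 => /eqP.
  exfalso; apply: nt; split => //.
  have [q1 q2 q3] := @Qz _ rC c1C cp1C s1C (expi th1) (expi th2) (expi (-th1)) (expi (-th2))
     (u1 0) (u2 0) (u3 0) (p1 0) (p2 0) (p3 0) w0 w1 (He th1) (He th2) H01 H02 H03 HB1 HB2 HB3.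
  have bz : forall b, w0 * D1C + b * D0C = 0 -> b = 0.
    move=> b; rewrite w0z mul0r add0r => /eqP; rewrite mulf_eq0 (negbTE D0C0) orbF.
    by move/eqP.
  have w1f : forall f : R[i], f * w1 = 0 by move=> f; rewrite w1z mulr0.
  have q1' : w0 * D1C + p1 0 * D0C = 0 := etrans q1 w1z.
  have q2' : w0 * D1C + p2 0 * D0C = 0 := etrans q2 (w1f _).
  have q3' : w0 * D1C + p3 0 * D0C = 0 := etrans q3 (w1f _).
  have az : forall u b, u - rC * b - w0 = 0 -> b = 0 -> u = 0.
    by move=> u b h hb; move: h; rewrite hb w0z mulr0 !subr0.
  have b1 := bz _ q1'; have b2 := bz _ q2'; have b3 := bz _ q3'.
  have a1 := az _ _ H01 b1; have a2 := az _ _ H02 b2; have a3 := az _ _ H03 b3.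
  move=> x hx.
  have [V1 _] := crep gq hc hs c0 cp0 s0 sp0 cs1 hx.
  have [V2 _] := crep gq hc hs c0 cp0 s0 sp0 cs2 hx.
  have [V3 _] := crep gq hc hs c0 cp0 s0 sp0 cs3 hx.
  by rewrite V1 V2 V3 a1 a2 a3 b1 b2 b3 !mul0r addr0.
case=> th1 [th2 [hth1 [hth2 hE]]].
exists th1, th2; split => //; split => //.
set N := Normc.normc (Sfun th1 th2).
have an : a != 0 by apply: lt0r_neq0.
have KrN : Kr ^+ 2 = (a * N) ^+ 2.
  case: hE => hE.
    have -> : Kr = a * N.
      by transitivity (3 * a * (D1 - lam * m / (3 * a) * D0)); [rewrite /Kr; field; exact: an | rewrite hE -/N; field].
    by [].
  have -> : Kr = - (a * N).
    by transitivity (3 * a * (D1 - lam * m / (3 * a) * D0)); [rewrite /Kr; field; exact: an | rewrite hE -/N; field].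
  by rewrite sqrrN.
have KS : KC ^+ 2 = AC ^+ 2 * (Sfun th1 th2 * Sb th1 th2).
  by rewrite S_Sb KCr /AC -!rmorphXn -rmorphM KrN exprMn.
have AC0 : AC != 0 by apply/eqP; case => /eqP; rewrite (negbTE an).
have [w0 [w1 [E1 [E2 w0nz]]]] : exists w0 w1 : R[i],
    AC * Sfun th1 th2 * w1 = KC * w0 /\ AC * Sb th1 th2 * w0 = KC * w1 /\ w0 != 0.
  have [K0|K0] := eqVneq KC 0.
    have ST : Sfun th1 th2 = 0.
      have ST0 : Sfun th1 th2 * Sb th1 th2 = 0.
        apply/eqP; move/eqP: KS; rewrite K0 expr2 mulr0 eq_sym mulf_eq0 mulf_eq0 (negbTE AC0) /=.
        by [].
      rewrite S_Sb -/N in ST0.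
      have N2 : N ^+ 2 = 0 by case: ST0.
      apply: Normc.eq0_normc; apply/eqP; rewrite -/N -sqrf_eq0; exact/eqP.
    have T0 := S0_Sb0 ST.
    exists 1, 0; rewrite ST T0 K0; split; [ring | split; [ring | exact: oner_neq0]].
  exists KC, (AC * Sb th1 th2); split.
    by transitivity (AC ^+ 2 * (Sfun th1 th2 * Sb th1 th2)); [ring | rewrite -KS; ring].
  by split => //; ring.
pose b1 := (1 * w1 - w0 * D1C) / D0C.
pose b2 := (expi (- th1) * w1 - w0 * D1C) / D0C.
pose b3 := (expi (- th2) * w1 - w0 * D1C) / D0C.
pose a1 := w0 + rC * b1.
pose a2 := w0 + rC * b2.
pose a3 := w0 + rC * b3.
have key : forall f b, b = (f * w1 - w0 * D1C) / D0C -> (w0 + rC * b) * D1C + b * D2C = f * w1.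
  move=> f b hb.
  transitivity (w0 * D1C + b * D0C); first by rewrite /D0C; ring.
  by rewrite hb; field.
have H01 : a1 - rC * b1 - w0 = 0 by rewrite /a1; ring.
have H02 : a2 - rC * b2 - w0 = 0 by rewrite /a2; ring.
have H03 : a3 - rC * b3 - w0 = 0 by rewrite /a3; ring.
have HB1 : (a1 * D1C + b1 * D2C) - w1 = 0 by rewrite /a1 (key 1 b1 erefl) mul1r subrr.
have HB2 : expi th1 * (a2 * D1C + b2 * D2C) - w1 = 0.
  by rewrite /a2 (key _ b2 erefl) mulrA expiN mul1r subrr.
have HB3 : expi th2 * (a3 * D1C + b3 * D2C) - w1 = 0.
  by rewrite /a3 (key _ b3 erefl) mulrA expiN mul1r subrr.
have [HA HC] := @bwd _ rC c1C cp1C s1C AC LC (expi th1) (expi th2) (expi (-th1)) (expi (-th2))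
   a1 a2 a3 b1 b2 b3 w0 w1 HW (He th1) (He th2) H01 H02 H03 HB1 HB2 HB3 D0C0 E1 E2.
exists (fun x => a1 * (c x)%:C + b1 * (s x)%:C)%C, (fun x => a1 * (cp x)%:C + b1 * (sp x)%:C)%C.
exists (fun x => a2 * (c x)%:C + b2 * (s x)%:C)%C, (fun x => a2 * (cp x)%:C + b2 * (sp x)%:C)%C.
exists (fun x => a3 * (c x)%:C + b3 * (s x)%:C)%C, (fun x => a3 * (cp x)%:C + b3 * (sp x)%:C)%C.
exists w0, w1.
split; first by split; exact: cis_sol.
split; first by case=> _ [h _]; move/eqP: w0nz.
split.
  rewrite !(U0 c0 s0) !(P0 cp0 sp0).
  by split; apply: subr0_eq; [exact: H01 | exact: H02 | exact: H03].
split.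
  apply: subr0_eq.
  by transitivity (- (AC * (b1 + b2 + b3) + LC * w0)); [rewrite !(P0 cp0 sp0) /AC /LC; ring | rewrite HA oppr0].
rewrite SY.
split.
  split; apply: subr0_eq.
  - by transitivity (a1 * D1C + b1 * D2C - w1); [rewrite /D1C /D2C /rC /c1C /cp1C /s1C; ring | exact: HB1].
  - by transitivity (expi th1 * (a2 * D1C + b2 * D2C) - w1); [rewrite /D1C /D2C /rC /c1C /cp1C /s1C; ring | exact: HB2].
  - by transitivity (expi th2 * (a3 * D1C + b3 * D2C) - w1); [rewrite /D1C /D2C /rC /c1C /cp1C /s1C; ring | exact: HB3].
apply: subr0_eq.
transitivity (AC * ((a1 * cp1C + b1 * c1C) + expi th1 * (a2 * cp1C + b2 * c1C)
      + expi th2 * (a3 * cp1C + b3 * c1C)) - LC * w1); last exact: HC.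
by rewrite /AC /LC /c1C /cp1C; ring.
Qed.
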